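(* Under the standing assumptions below, let $(x^\star,\lambda^\star,s^\star)$ be an optimal primal-dual solution, let $\epsilon>0$, and let $\zeta>0$ satisfy $\|(x^\star,s^\star)\|\le\zeta$ and $\zeta^2\le\chi/\epsilon^\kappa$ for some constants $\chi,\kappa>0$. Run Algorithm IIPM from $(x^0,\lambda^0,s^0)=(\zeta e,0,\zeta e)$. Then there is an index $K=O(n^2|\log\epsilon|)$ such that the iterates satisfy $\mu^k\le\epsilon$ for all $k\ge K$.
   Context: Standing assumptions: $Q\in\mathbb{S}^{n+1}$ (real symmetric), $q\in\mathbb{R}^{n+1}$, $A\in\mathbb{R}^{m\times(n+1)}$ has full row rank $m$, and $x^TQx>0$ for every nonzero $x$ with $Ax=0$; the problem is $\min\{\tfrac12x^TQx+q^Tx : Ax=0,\ x\ge0\}$. An optimal primal-dual solution is $(x^\star,\lambda^\star,s^\star)$ with $Qx^\star+q+A^T\lambda^\star-s^\star=0$, $Ax^\star=0$, $x^\star,s^\star\ge0$, $(x^\star)^Ts^\star=0$. $e\in\mathbb{R}^{n+1}$ is the all-ones vector, $X=\mathrm{Diag}(x)$, $S=\mathrm{Diag}(s)$. Residuals: $r_d(x,\lambda,s)=Qx+q+A^T\lambda-s$, $r_p(x,\lambda,s)=Ax$, $r_c(x,\lambda,s)=Xs$, and $\mu(x,s)=x^Ts/(n+1)$; write $r_d^k,r_p^k,r_c^k,\mu^k$ for their values at the $k$-th iterate. Neighborhood, for parameters $\gamma\in(0,1)$, $\beta\ge1$: $\mathcal N_{-\infty}(\gamma,\beta)=\{(x,\lambda,s):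 \|(r_d,r_p)\|/\mu\le\beta\|(r_d^0,r_p^0)\|/\mu^0,\ (x,s)>0,\ Xs\ge\gamma\mu(x,s)e\}$. Algorithm IIPM (parameters $\beta\ge1$, $\gamma\in(0,1)$, $0<\sigma^{\min}<\sigma^{\max}\le\tfrac12$): starting from $(x^0,s^0)>0$, at iteration $k$ choose $\sigma^k\in[\sigma^{\min},\sigma^{\max}]$, compute $(\Delta x^k,\Delta\lambda^k,\Delta s^k)$ solving $Q\Delta x+A^T\Delta\lambda-\Delta s=-r_d^k$, $A\Delta x=-r_p^k$, $S^k\Delta x+X^k\Delta s=-r_c^k+\sigma^k\mu^ke$; then choose $\alpha^k$ as the largest $\alpha\in(0,1]$ such that $(x^k,\lambda^k,s^k)+\alpha(\Delta x^k,\Delta\lambda^k,\Delta s^k)\in\mathcal N_{-\infty}(\gamma,\beta)$ and $\mu(x^k+\alpha\Delta x^k,s^k+\alpha\Delta s^k)\le(1-0.01\alpha)\mu^k$; set the next iterate to $(x^k,\lambda^k,s^k)+\alpha^k(\Delta x^k,\Delta\lambda^k,\Delta s^k)$. The constant in $O(\cdot)$ depends on $\chi,\kappa,\beta,\gamma,\sigma^{\min},\sigma^{\max}$ but not on $n$ or $\epsilon$. *)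

(* Defs.v *)
From HB Require Import structures.
From mathcomp Require Import all_boot all_order all_algebra.
From mathcomp Require Import all_classical all_reals all_analysis.
Set Implicit Arguments. Unset Strict Implicit. Unset Printing Implicit Defensive.
Import Order.TTheory GRing.Theory Num.Theory.
Local Open Scope ring_scope.

Section IIPM.
Variable R : realType.

Definition dotv (p : nat) (u v : 'cV[R]_p) : R := (u^T *m v) 0 0.
Definition vnorm (p : nat) (u : 'cV[R]_p) : R := Num.sqrt (dotv u u).
Definition pnorm (p r : nat) (u : 'cV[R]_p) (v : 'cV[R]_r) : R :=
  Num.sqrt (dotv u u + dotv v v).

Definition onesv (p : nat) : 'cV[R]_p := const_mx 1.

Variables (n m : nat) (Q : 'M[R]_n.+1) (q : 'cV[R]_n.+1) (A : 'M[R]_(m, n.+1)).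

Definition std_assumptions : Prop :=
  [/\ Q^T = Q, \rank A = m &
      forall x : 'cV[R]_n.+1, A *m x = 0 -> x != 0 -> 0 < dotv x (Q *m x)].

Definition r_d (x : 'cV[R]_n.+1) (l : 'cV[R]_m) (s : 'cV[R]_n.+1) : 'cV[R]_n.+1 :=
  Q *m x + q + A^T *m l - s.
Definition r_p (x : 'cV[R]_n.+1) : 'cV[R]_m := A *m x.
Definition r_c (x s : 'cV[R]_n.+1) : 'cV[R]_n.+1 := \col_i (x i 0 * s i 0).
Definition mu (x s : 'cV[R]_n.+1) : R := dotv x s / n.+1%:R.

Definition optimal_pd (x : 'cV[R]_n.+1) (l : 'cV[R]_m) (s : 'cV[R]_n.+1) : Prop :=
  [/\ r_d x l s = 0, A *m x = 0, (forall i, 0 <= x i 0),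
      (forall i, 0 <= s i 0) & dotv x s = 0].

Definition nbhd (gamma beta : R) (x0 : 'cV[R]_n.+1) (l0 : 'cV[R]_m) (s0 : 'cV[R]_n.+1)
    (x : 'cV[R]_n.+1) (l : 'cV[R]_m) (s : 'cV[R]_n.+1) : Prop :=
  [/\ pnorm (r_d x l s) (r_p x) / mu x s
        <= beta * pnorm (r_d x0 l0 s0) (r_p x0) / mu x0 s0,
      (forall i, 0 < x i 0), (forall i, 0 < s i 0) &
      (forall i, gamma * mu x s <= x i 0 * s i 0)].

Definition IIPM_run (beta gamma smin smax : R)
    (x : nat -> 'cV[R]_n.+1) (l : nat -> 'cV[R]_m) (s : nat -> 'cV[R]_n.+1)
    (sigma : nat -> R)
    (dx : nat -> 'cV[R]_n.+1) (dl : nat -> 'cV[R]_m) (ds : nat -> 'cV[R]_n.+1)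
    (alpha : nat -> R) : Prop :=
  (forall i, 0 < x 0%N i 0) /\ (forall i, 0 < s 0%N i 0) /\
  forall k : nat,
    let acceptable (a : R) :=
      [/\ 0 < a, a <= 1,
          nbhd gamma beta (x 0%N) (l 0%N) (s 0%N)
               (x k + a *: dx k) (l k + a *: dl k) (s k + a *: ds k) &
          mu (x k + a *: dx k) (s k + a *: ds k) <= (1 - a / 100) * mu (x k) (s k)] in
    [/\ smin <= sigma k <= smax,
        [/\ Q *m dx k + A^T *m dl k - ds k = - r_d (x k) (l k) (s k),
        A *m dx k = - r_p (x k) &
        (forall i, s k i 0 * dx k i 0 + x k i 0 * ds k i 0
                   = - (x k i 0 * s k i 0) + sigma k * mu (x k) (s k))],
        acceptable (alpha k) /\ (forall a, acceptable a -> a <= alpha k) &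
        [/\ x k.+1 = x k + alpha k *: dx k,
            l k.+1 = l k + alpha k *: dl k &
            s k.+1 = s k + alpha k *: ds k]].

End IIPM.

(* Main.v *)
Require Import Defs.
From HB Require Import structures.
From mathcomp Require Import all_boot all_order all_algebra.
From mathcomp Require Import all_classical all_reals all_analysis.
From mathcomp Require Import ring lra.
Import Order.TTheory GRing.Theory Num.Theory.
Set Implicit Arguments. Unset Strict Implicit. Unset Printing Implicit Defensive.
Local Open Scope ring_scope.

Section Scalar.
Variable R : realFieldType.

Lemma sum_const_ord (N : nat) (c : R) : \sum_(i < N) c = N%:R * c.
Proof. by rewrite sumr_const card_ord mulr_natl. Qed.

Lemma term_le_sum (N : nat) (F : 'I_N -> R) :
  (forall i, 0 <= F i) -> forall j, F j <= \sum_i F i.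
Proof.
move=> H j; rewrite (bigD1 j) //= lerDl; apply: sumr_ge0 => i _; exact: H.
Qed.

Lemma s1_term (t z a b x s : R) :
  0 <= t <= 1 -> 0 <= a <= z -> 0 <= b <= z -> 0 < x -> 0 < s ->
  t * z * (x + s) <=
  2 * t * z ^+ 2 + (1 - t) ^+ 2 * (a * b) + x * s
  - (t * z + (1 - t) * a - x) * (t * z + (1 - t) * b - s).
Proof.
move=> /andP[t0 t1] /andP[a0 az] /andP[b0 bz] x0 s0.
have h1 : t * z * (1 - t) * (a + b) <= t * z * (1 - t) * (2 * z).
  apply: ler_wpM2l; last lra.
  apply: mulr_ge0; [apply: mulr_ge0 => //; lra| lra].
have h2 : 0 <= (1 - t) * (a * s + x * b).
  apply: mulr_ge0; first lra.
  apply: addr_ge0; apply: mulr_ge0 => //; lra.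
have h3 : 0 <= t ^+ 2 * z ^+ 2 by rewrite -exprMn sqr_ge0.
have e : 2 * t * z ^+ 2 + (1 - t) ^+ 2 * (a * b) + x * s
  - (t * z + (1 - t) * a - x) * (t * z + (1 - t) * b - s) - t * z * (x + s)
  = t ^+ 2 * z ^+ 2 + (t * z * (1 - t) * (2 * z) - t * z * (1 - t) * (a + b))
    + (1 - t) * (a * s + x * b) by ring.
lra.
Qed.


Lemma step1 (N : nat) (x s xs ss : 'I_N -> R) (t z beta mu : R) :
  0 <= t <= 1 -> (forall i, 0 <= xs i <= z) -> (forall i, 0 <= ss i <= z) ->
  (forall i, 0 < x i) -> (forall i, 0 < s i) ->
  \sum_i xs i * ss i = 0 ->
  0 <= \sum_i (t * z + (1 - t) * xs i - x i) * (t * z + (1 - t) * ss i - s i) ->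
  \sum_i x i * s i = N%:R * mu ->
  t * z ^+ 2 <= beta * mu -> 1 <= beta ->
  t * z * \sum_i (x i + s i) <= 3 * beta * (N%:R * mu).
Proof.
move=> ht hxs hss hx hs hxss hmono hmu htb hb.
have H : \sum_i t * z * (x i + s i) <= \sum_i (2 * t * z ^+ 2 + (1 - t) ^+ 2 * (xs i * ss i) + x i * s i
  - (t * z + (1 - t) * xs i - x i) * (t * z + (1 - t) * ss i - s i)).
  by apply: ler_sum => i _; apply: s1_term.
rewrite -mulr_sumr !sumrB !big_split /= -[\sum_(i < N) (1 - t) ^+ 2 * _]mulr_sumr hxss in H.
rewrite sum_const_ord hmu in H. rewrite big_split /=.
have Nmu0 : 0 <= N%:R * mu by rewrite -hmu; apply: sumr_ge0 => i _;
  apply: mulr_ge0; apply: ltW.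
have e1 : N%:R * (t * z ^+ 2) <= N%:R * (beta * mu) by apply: ler_wpM2l.
have e2 : 0 <= (beta - 1) * (N%:R * mu) by apply: mulr_ge0 => //; lra.
have e3 : N%:R * (2 * t * z ^+ 2) = 2 * (N%:R * (t * z ^+ 2)) by ring.
have e4 : N%:R * (beta * mu) = beta * (N%:R * mu) by ring.
lra.
Qed.


Lemma sq_shrink (z c : R) : 0 <= c <= z -> (z - c) ^+ 2 <= z ^+ 2.
Proof.
move=> /andP[c0 cz]; rewrite !expr2; apply: ler_pM; lra.
Qed.

Lemma d_term (x s dx ds a' b' t z sig mu gam : R) :
  0 < x -> 0 < s -> 0 < mu -> 0 < gam -> gam * mu <= x * s ->
  0 <= sig <= 1 -> 0 <= a' <= z -> 0 <= b' <= z -> 0 <= t ->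
  s * dx + x * ds = - (x * s) + sig * mu ->
  s * dx ^+ 2 / x + x * ds ^+ 2 / s <=
  6 * (x * s) + 6 * (mu / gam) + (8 * (t ^+ 2 * z ^+ 2) / (gam * mu)) * (x ^+ 2 + s ^+ 2)
  - 4 * ((dx + t * (z - a')) * (ds + t * (z - b'))).
Proof.
move=> x0 s0 mu0 g0 gxs /andP[sg0 sg1] ha hb t0 hN.
set a := dx + t * (z - a'); set b := ds + t * (z - b').
set g := sig * mu - x * s; set v := t * s * (z - a'); set w := t * x * (z - b').
have xs0 : 0 < x * s by apply: mulr_gt0.
have gm0 : 0 < gam * mu by apply: mulr_gt0.
have e1 : s * a + x * b = g + v + w.
  have -> : s * a + x * b = (s * dx + x * ds) + v + w by rewrite /a /b /v /w; ring.
  by rewrite hN /g; ring.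
have e2 : (g + v + w) ^+ 2 <= 3 * (g ^+ 2 + v ^+ 2 + w ^+ 2).
  have : 0 <= (g - v) ^+ 2 + (v - w) ^+ 2 + (g - w) ^+ 2
    by rewrite !addr_ge0 // sqr_ge0.
  have -> : (g - v) ^+ 2 + (v - w) ^+ 2 + (g - w) ^+ 2 =
     3 * (g ^+ 2 + v ^+ 2 + w ^+ 2) - (g + v + w) ^+ 2 by ring.
  by rewrite subr_ge0.
set T := t ^+ 2 * z ^+ 2 * (x ^+ 2 + s ^+ 2).
have T0 : 0 <= T by rewrite /T; apply: mulr_ge0; [apply: mulr_ge0; apply: sqr_ge0 | apply: addr_ge0; apply: sqr_ge0].
have e3 : v ^+ 2 + w ^+ 2 <= T.
  have h1 := sq_shrink ha; have h2 := sq_shrink hb.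
  have hv : v ^+ 2 = (t ^+ 2 * s ^+ 2) * (z - a') ^+ 2 by rewrite /v; ring.
  have hw : w ^+ 2 = (t ^+ 2 * x ^+ 2) * (z - b') ^+ 2 by rewrite /w; ring.
  have ts0 : 0 <= t ^+ 2 * s ^+ 2 by rewrite mulr_ge0 // sqr_ge0.
  have tx0 : 0 <= t ^+ 2 * x ^+ 2 by rewrite mulr_ge0 // sqr_ge0.
  have := ler_wpM2l ts0 h1; have := ler_wpM2l tx0 h2.
  rewrite hv hw /T; move=> i1 i2.
  have -> : t ^+ 2 * z ^+ 2 * (x ^+ 2 + s ^+ 2) =
     t ^+ 2 * x ^+ 2 * z ^+ 2 + t ^+ 2 * s ^+ 2 * z ^+ 2 by ring.
  lra.
have e4 : s * a ^+ 2 / x + x * b ^+ 2 / s + 2 * (a * b) = (s * a + x * b) ^+ 2 / (x * s).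
  by field; apply/andP; split; apply: lt0r_neq0.
have e5 : g ^+ 2 / (x * s) <= x * s + mu / gam.
  rewrite ler_pdivrMr // mulrDl.
  have -> : mu / gam * (x * s) = (x * s * mu) / gam by ring.
  have hmu2 : mu ^+ 2 <= x * s * mu / gam.
    rewrite ler_pdivlMr //.
    have h := ler_wpM2l (ltW mu0) gxs.
    have -> : mu ^+ 2 * gam = mu * (gam * mu) by ring.
    by have -> : x * s * mu = mu * (x * s) by ring.
  have hs2 : (sig * mu) ^+ 2 <= mu ^+ 2.
    rewrite exprMn; rewrite -[X in _ <= X]mul1r; apply: ler_wpM2r; first exact: sqr_ge0.
    rewrite expr2; have := ler_pM sg0 sg0 sg1 sg1; lra.
  have hcr : 0 <= sig * mu * (x * s) by rewrite !mulr_ge0 //; apply: ltW.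
  have -> : g ^+ 2 = (sig * mu) ^+ 2 - 2 * (sig * mu * (x * s)) + (x * s) * (x * s)
    by rewrite /g; ring.
  lra.
have e6 : (v ^+ 2 + w ^+ 2) / (x * s) <= T / (gam * mu).
  apply: (le_trans (y := T / (x * s))).
    by apply: ler_wpM2r => //; rewrite invr_ge0; apply: ltW.
  apply: ler_wpM2l => //; rewrite lef_pV2 // posrE //.
have e7 : dx ^+ 2 <= 2 * a ^+ 2 + 2 * (t ^+ 2 * z ^+ 2).
  have h1 := sq_shrink ha.
  have -> : dx = a - t * (z - a') by rewrite /a; ring.
  have : 0 <= (a + t * (z - a')) ^+ 2 by apply: sqr_ge0.
  have : t ^+ 2 * (z - a') ^+ 2 <= t ^+ 2 * z ^+ 2
    by apply: ler_wpM2l => //; apply: sqr_ge0.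
  have -> : (a - t * (z - a')) ^+ 2 = 2 * a ^+ 2 + 2 * (t ^+ 2 * (z - a') ^+ 2)
    - (a + t * (z - a')) ^+ 2 by ring.
  lra.
have e8 : ds ^+ 2 <= 2 * b ^+ 2 + 2 * (t ^+ 2 * z ^+ 2).
  have h1 := sq_shrink hb.
  have -> : ds = b - t * (z - b') by rewrite /b; ring.
  have : 0 <= (b + t * (z - b')) ^+ 2 by apply: sqr_ge0.
  have : t ^+ 2 * (z - b') ^+ 2 <= t ^+ 2 * z ^+ 2
    by apply: ler_wpM2l => //; apply: sqr_ge0.
  have -> : (b - t * (z - b')) ^+ 2 = 2 * b ^+ 2 + 2 * (t ^+ 2 * (z - b') ^+ 2)
    - (b + t * (z - b')) ^+ 2 by ring.
  lra.
have sx0 : 0 <= s / x by rewrite divr_ge0 // ltW.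
have xs0' : 0 <= x / s by rewrite divr_ge0 // ltW.
have e9 : s * dx ^+ 2 / x + x * ds ^+ 2 / s <=
   2 * (s * a ^+ 2 / x + x * b ^+ 2 / s) + 2 * (T / (x * s)).
  have f1 := ler_wpM2l sx0 e7; have f2 := ler_wpM2l xs0' e8.
  have -> : s * dx ^+ 2 / x = s / x * dx ^+ 2 by ring.
  have -> : x * ds ^+ 2 / s = x / s * ds ^+ 2 by ring.
  have -> : 2 * (s * a ^+ 2 / x + x * b ^+ 2 / s) + 2 * (T / (x * s)) =
     s / x * (2 * a ^+ 2 + 2 * (t ^+ 2 * z ^+ 2)) +
     x / s * (2 * b ^+ 2 + 2 * (t ^+ 2 * z ^+ 2)).
    by rewrite /T; field; apply/andP; split; apply: lt0r_neq0.
  lra.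
have e10 : T / (x * s) <= T / (gam * mu).
  by apply: ler_wpM2l => //; rewrite lef_pV2 // posrE //.
have e11 : (g + v + w) ^+ 2 / (x * s) <= 3 * (g ^+ 2 / (x * s)) + 3 * ((v ^+ 2 + w ^+ 2) / (x * s)).
  have -> : 3 * (g ^+ 2 / (x * s)) + 3 * ((v ^+ 2 + w ^+ 2) / (x * s)) =
    3 * (g ^+ 2 + v ^+ 2 + w ^+ 2) / (x * s) by ring.
  by apply: ler_wpM2r => //; rewrite invr_ge0 ltW.
have -> : 8 * (t ^+ 2 * z ^+ 2) / (gam * mu) * (x ^+ 2 + s ^+ 2) = 8 * (T / (gam * mu))
  by rewrite /T; ring.
rewrite e1 in e4.
lra.
Qed.


Definition c2 (gam beta : R) := 6 * (1 + 1 / gam) + 72 * beta ^+ 2 / gam.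

Lemma bound_D (N : nat) (x s dx ds xs ss : 'I_N -> R) (t z sig mu gam beta : R) :
  (0 < N)%N ->
  (forall i, 0 < x i) -> (forall i, 0 < s i) -> 0 < mu -> 0 < gam ->
  (forall i, gam * mu <= x i * s i) -> 0 <= sig <= 1 ->
  (forall i, 0 <= xs i <= z) -> (forall i, 0 <= ss i <= z) -> 0 <= t <= 1 ->
  (forall i, s i * dx i + x i * ds i = - (x i * s i) + sig * mu) ->
  \sum_i x i * s i = N%:R * mu ->
  \sum_i xs i * ss i = 0 ->
  0 <= \sum_i (t * z + (1 - t) * xs i - x i) * (t * z + (1 - t) * ss i - s i) ->
  0 <= \sum_i (dx i + t * (z - xs i)) * (ds i + t * (z - ss i)) ->
  t * z ^+ 2 <= beta * mu -> 1 <= beta ->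
  \sum_i (s i * dx i ^+ 2 / x i + x i * ds i ^+ 2 / s i) <= c2 gam beta * (N%:R ^+ 2 * mu).
Proof.
move=> N0 hx hs mu0 g0 hg hsig hxs hss ht hN hmu hxss hm1 hm2 htb hb.
have z0 : 0 <= z by case/andP: (hxs (Ordinal N0)) => h1 h2; apply: le_trans h2.
have t0 : 0 <= t by case/andP: ht.
set K := 8 * (t ^+ 2 * z ^+ 2) / (gam * mu).
have H : \sum_i (s i * dx i ^+ 2 / x i + x i * ds i ^+ 2 / s i) <=
  \sum_i (6 * (x i * s i) + 6 * (mu / gam) + K * (x i ^+ 2 + s i ^+ 2)
      - 4 * ((dx i + t * (z - xs i)) * (ds i + t * (z - ss i)))).
  apply: ler_sum => i _; rewrite /K; exact: (d_term (hx i) (hs i) mu0 g0 (hg i) hsig (hxs i) (hss i) t0 (hN i)).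
rewrite sumrB !big_split /= -!mulr_sumr sum_const_ord hmu in H.
set S1 := \sum_i (x i + s i).
have hS : \sum_i (x i ^+ 2 + s i ^+ 2) <= S1 * S1.
  rewrite /S1 [X in _ <= X]mulr_sumr.
  apply: ler_sum => i _.
  have hle : x i + s i <= S1.
    apply: (term_le_sum (F := fun i => x i + s i)) => j.
    by apply: addr_ge0; apply: ltW.
  have xi := hx i; have si := hs i.
  have : (x i + s i) * (x i + s i) <= (x i + s i) * S1.
    by apply: ler_wpM2l => //; apply: addr_ge0; apply: ltW.
  have : 0 <= x i * s i by apply: mulr_ge0; apply: ltW.
  rewrite !expr2. 
  have -> : S1 * (x i + s i) = (x i + s i) * S1 by ring.
  have -> : (x i + s i) * (x i + s i) = x i * x i + s i * s i + 2 * (x i * s i) by ring.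
  lra.
have hst := step1 ht hxs hss hx hs hxss hm1 hmu htb hb.
rewrite -/S1 in hst.
have S10 : 0 <= S1 by apply: sumr_ge0 => i _; apply: addr_ge0; apply: ltW.
have tzS0 : 0 <= t * z * S1 by rewrite !mulr_ge0.
have hsq : (t * z * S1) ^+ 2 <= (3 * beta * (N%:R * mu)) ^+ 2.
  by rewrite !expr2; apply: ler_pM.
have K0 : 0 <= K by rewrite /K !mulr_ge0 // ?invr_ge0 ?mulr_ge0 ?sqr_ge0 // ltW.
have hKS : K * \sum_i (x i ^+ 2 + s i ^+ 2) <= 72 * beta ^+ 2 / gam * (N%:R ^+ 2 * mu).
  apply: le_trans (ler_wpM2l K0 hS) _.
  have -> : K * (S1 * S1) = 8 * (t * z * S1) ^+ 2 / (gam * mu).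
    by rewrite /K; ring.
  have gm0 : 0 < gam * mu by apply: mulr_gt0.
  apply: (@le_trans _ _ (8 * (3 * beta * (N%:R * mu)) ^+ 2 / (gam * mu))).
    apply: ler_wpM2r; first by rewrite invr_ge0 ltW.
    by apply: ler_wpM2l.
  rewrite le_eqVlt; apply/orP; left; apply/eqP.
  by field; apply/andP; split; apply: lt0r_neq0.
have hN1 : 1 <= N%:R :> R by rewrite ler1n.
have hNN : N%:R * mu <= N%:R ^+ 2 * mu.
  apply: ler_wpM2r; first exact: ltW.
  by rewrite expr2 -[X in X <= _]mul1r; apply: ler_wpM2r => //; apply: le_trans hN1.
have hNN' : N%:R * (mu / gam) <= N%:R ^+ 2 * mu / gam.
  rewrite mulrA; apply: ler_wpM2r; first by rewrite invr_ge0 ltW.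
  exact: hNN.
rewrite /c2.
have -> : (6 * (1 + 1 / gam) + 72 * beta ^+ 2 / gam) * (N%:R ^+ 2 * mu)
  = 6 * (N%:R ^+ 2 * mu) + 6 * (N%:R ^+ 2 * mu / gam) + 72 * beta ^+ 2 / gam * (N%:R ^+ 2 * mu).
  by field; apply: lt0r_neq0.
have e : mu * (N%:R / gam) = N%:R * (mu / gam) by ring.
rewrite big_split /=. lra.
Qed.


Lemma amgm (x s dx ds : R) : 0 < x -> 0 < s ->
  `|dx * ds| <= (s * dx ^+ 2 / x + x * ds ^+ 2 / s) / 2.
Proof.
move=> x0 s0.
have xs0 : 0 < x * s by apply: mulr_gt0.
have nz : (x != 0) && (s != 0) by apply/andP; split; apply: lt0r_neq0.
case: (lerP 0 (dx * ds)) => h.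
- rewrite ger0_norm //.
  have e : (s * dx ^+ 2 / x + x * ds ^+ 2 / s) / 2 - dx * ds
    = (s * dx - x * ds) ^+ 2 / (x * s) / 2 by field; rewrite andbC.
  have : 0 <= (s * dx - x * ds) ^+ 2 / (x * s) / 2.
    by rewrite !divr_ge0 ?sqr_ge0 // ltW.
  lra.
- rewrite ltr0_norm //.
  have e : (s * dx ^+ 2 / x + x * ds ^+ 2 / s) / 2 + dx * ds
    = (s * dx + x * ds) ^+ 2 / (x * s) / 2 by field; rewrite andbC.
  have : 0 <= (s * dx + x * ds) ^+ 2 / (x * s) / 2.
    by rewrite !divr_ge0 ?sqr_ge0 // ltW.
  lra.
Qed.

Lemma D_ge0 (x s dx ds : R) : 0 < x -> 0 < s ->
  0 <= s * dx ^+ 2 / x + x * ds ^+ 2 / s.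
Proof.
move=> x0 s0; apply: addr_ge0; apply: divr_ge0; try (apply: mulr_ge0);
  rewrite ?sqr_ge0 ?ltW //.
Qed.

Lemma p_expand (x s dx ds sig mu b : R) :
  s * dx + x * ds = - (x * s) + sig * mu ->
  (x + b * dx) * (s + b * ds) = (1 - b) * (x * s) + b * (sig * mu) + b ^+ 2 * (dx * ds).
Proof.
move=> h.
have -> : (x + b * dx) * (s + b * ds) = x * s + b * (s * dx + x * ds) + b ^+ 2 * (dx * ds) by ring.
rewrite h; ring.
Qed.

Lemma p_lower (x s dx ds sig mu gam W b : R) :
  s * dx + x * ds = - (x * s) + sig * mu -> gam * mu <= x * s ->
  `|dx * ds| <= W -> 0 <= b <= 1 ->
  (1 - b) * (gam * mu) + b * (sig * mu) - b ^+ 2 * W <= (x + b * dx) * (s + b * ds).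
Proof.
move=> hN hg hW /andP[b0 b1]; rewrite (p_expand _ hN).
have h1 : (1 - b) * (gam * mu) <= (1 - b) * (x * s) by apply: ler_wpM2l => //; lra.
have b20 : 0 <= b ^+ 2 by apply: sqr_ge0.
have h2 : - (b ^+ 2 * W) <= b ^+ 2 * (dx * ds).
  rewrite -mulrN; apply: ler_wpM2l => //.
  by rewrite lerNl; apply: le_trans hW; rewrite -normrN ler_norm.
lra.
Qed.

Lemma pos_step (x s dx ds sig mu gam W a : R) :
  0 < x -> 0 < s -> 0 < mu -> 0 < gam -> 0 < sig ->
  s * dx + x * ds = - (x * s) + sig * mu -> gam * mu <= x * s ->
  `|dx * ds| <= W -> 0 < a <= 1 -> a * W < sig * mu ->
  0 < x + a * dx /\ 0 < s + a * ds.
Proof.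
move=> x0 s0 mu0 g0 sg0 hN hg hW /andP[a0 a1] haW.
have W0 : 0 <= W by apply: le_trans hW.
have key : forall b, 0 < b <= a -> 0 < (x + b * dx) * (s + b * ds).
  move=> b /andP[b0 ba].
  have hb1 : 0 <= b <= 1 by apply/andP; split; [apply: ltW | apply: le_trans a1].
  have := p_lower hN hg hW hb1.
  have h1 : 0 <= (1 - b) * (gam * mu) by apply: mulr_ge0; [lra | apply: ltW; apply: mulr_gt0].
  have h2 : b * W <= a * W by apply: ler_wpM2r.
  have h3 : 0 < b * (sig * mu - b * W) by apply: mulr_gt0 => //; lra.
  have -> : (1 - b) * (gam * mu) + b * (sig * mu) - b ^+ 2 * W
     = (1 - b) * (gam * mu) + b * (sig * mu - b * W) by ring.
  lra.
split.
- rewrite ltNge; apply/negP => hle.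
  have dxn : dx < 0.
    rewrite ltNge; apply/negP => hd.
    have : 0 <= a * dx by apply: mulr_ge0 => //; apply: ltW.
    lra.
  set b := x / (- dx).
  have b0 : 0 < b by rewrite /b divr_gt0 // oppr_gt0.
  have ba : b <= a.
    rewrite /b ler_pdivrMr ?oppr_gt0 //.
    have -> : a * - dx = - (a * dx) by ring.
    lra.
  have hz : x + b * dx = 0 by rewrite /b; field; apply: ltr0_neq0.
  have := key b; rewrite hz mul0r ltxx b0 ba /=; by move/(_ isT).
- rewrite ltNge; apply/negP => hle.
  have dsn : ds < 0.
    rewrite ltNge; apply/negP => hd.
    have : 0 <= a * ds by apply: mulr_ge0 => //; apply: ltW.
    lra.
  set b := s / (- ds).
  have b0 : 0 < b by rewrite /b divr_gt0 // oppr_gt0.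
  have ba : b <= a.
    rewrite /b ler_pdivrMr ?oppr_gt0 //.
    have -> : a * - ds = - (a * ds) by ring.
    lra.
  have hz : s + b * ds = 0 by rewrite /b; field; apply: ltr0_neq0.
  have := key b; rewrite hz mulr0 ltxx b0 ba /=; by move/(_ isT).
Qed.


Lemma step_ok (N : nat) (x s dx ds : 'I_N -> R) (sig mu gam W a : R) :
  (0 < N)%N ->
  (forall i, 0 < x i) -> (forall i, 0 < s i) -> 0 < mu -> 0 < gam < 1 ->
  0 < sig <= 1 / 2 ->
  (forall i, s i * dx i + x i * ds i = - (x i * s i) + sig * mu) ->
  (forall i, gam * mu <= x i * s i) ->
  \sum_i x i * s i = N%:R * mu ->
  (forall i, `|dx i * ds i| <= W) -> `|\sum_i dx i * ds i| <= W ->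
  0 < a <= 1 -> 4 * (a * W) <= sig * (1 - gam) * mu ->
  let M := (\sum_i (x i + a * dx i) * (s i + a * ds i)) / N%:R in
  [/\ forall i, 0 < x i + a * dx i, forall i, 0 < s i + a * ds i,
      forall i, gam * M <= (x i + a * dx i) * (s i + a * ds i),
      M <= (1 - a / 100) * mu & (1 - a) * mu <= M].
Proof.
move=> N0 hx hs mu0 /andP[g0 g1] /andP[sg0 sg1] hN hg hmu hW hSW /andP[a0 a1] haW M.
have W0 : 0 <= W by apply: le_trans (hW (Ordinal N0)).
have Nr0 : 0 < N%:R :> R by rewrite ltr0n.
have N1 : 1 <= N%:R :> R by rewrite ler1n.
set S := \sum_i dx i * ds i.
have hsum : \sum_i (x i + a * dx i) * (s i + a * ds i)
    = (1 - a) * (N%:R * mu) + a * (sig * mu) * N%:R + a ^+ 2 * S.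
  rewrite (eq_bigr (fun i => (1 - a) * (x i * s i) + a * (sig * mu) + a ^+ 2 * (dx i * ds i)));
    last by move=> i _; apply: p_expand.
  rewrite !big_split /= -!mulr_sumr sum_const_ord hmu -/S; ring.
have hM : M = (1 - a) * mu + a * (sig * mu) + a ^+ 2 * (S / N%:R).
  by rewrite /M hsum; field; apply: lt0r_neq0.
have hSN : `|S / N%:R| <= W.
  rewrite normrM; apply: le_trans hSW.
  rewrite -[X in _ <= X]mulr1; apply: ler_wpM2l => //.
  by rewrite normfV ger0_norm ?ler0n // invf_le1.
set X := a * (sig * mu); set Y := a ^+ 2 * W; set Z := a * (sig * (1 - gam) * mu).
have hY : Y <= Z / 4.
  have := ler_wpM2l (ltW a0) haW.
  have -> : a * (4 * (a * W)) = 4 * Y by rewrite /Y; ring.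
  rewrite /Z; lra.
have hZ : Z = X - gam * X by rewrite /Z /X; ring.
have Y0 : 0 <= Y by rewrite /Y mulr_ge0 ?sqr_ge0.
have X0 : 0 <= X by rewrite /X !mulr_ge0 // ltW.
have gX : 0 <= gam * X by rewrite mulr_ge0 // ltW.
have gY : gam * Y <= Y by rewrite -[X in _ <= X]mul1r; apply: ler_wpM2r => //; apply: ltW.
have hE1 : a ^+ 2 * (S / N%:R) <= Y.
  rewrite /Y; apply: ler_wpM2l; first exact: sqr_ge0.
  by apply: le_trans hSN; apply: ler_norm.
have hE2 : - Y <= a ^+ 2 * (S / N%:R).
  rewrite /Y -mulrN; apply: ler_wpM2l; first exact: sqr_ge0.
  by rewrite lerNl; apply: le_trans hSN; rewrite -normrN ler_norm.
have hXa : X <= (a * mu) / 2.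
  rewrite /X.
  have := ler_wpM2l (ltW a0) (ler_wpM2r (ltW mu0) sg1).
  have -> : a * (1 / 2 * mu) = a * mu / 2 by ring.
  by have -> : a * (sig * mu) = a * (sig * mu) by [].
have hA : a * W < sig * mu.
  have : sig * (1 - gam) * mu <= sig * mu.
    rewrite -mulrA ler_pM2l // -[X in _ <= X]mul1r; apply: ler_wpM2r; [exact: ltW|lra].
  have : 0 < sig * (1 - gam) * mu by rewrite !mulr_gt0 //; lra.
  lra.
have hW' : forall i, `|dx i * ds i| <= W := hW.
split.
- by move=> i; case: (pos_step (hx i) (hs i) mu0 g0 sg0 (hN i) (hg i) (hW i) _ hA) => //;
    apply/andP; split.
- by move=> i; case: (pos_step (hx i) (hs i) mu0 g0 sg0 (hN i) (hg i) (hW i) _ hA) => //;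
    apply/andP; split.
- move=> i.
  have hb : 0 <= a <= 1 by apply/andP; split => //; apply: ltW.
  have hp := p_lower (hN i) (hg i) (hW i) hb.
  have hMu : M <= (1 - a) * mu + X + Y by rewrite hM /X; lra.
  have hgM := ler_wpM2l (ltW g0) hMu.
  have e : gam * ((1 - a) * mu + X + Y) = (1 - a) * (gam * mu) + gam * X + gam * Y by ring.
  rewrite e -/X -/Y in hgM hp.
  lra.
- rewrite hM.
  have -> : (1 - a / 100) * mu = mu - (a * mu) / 100 by ring.
  have -> : (1 - a) * mu = mu - a * mu by ring.
  rewrite -/X; lra.
- rewrite hM -/X; lra.
Qed.

End Scalar.

Section Mx.
Variable R : realType.

Lemma dotv_sum (p : nat) (u v : 'cV[R]_p) : dotv u v = \sum_i u i 0 * v i 0.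
Proof. by rewrite /dotv mxE; apply: eq_bigr => i _; rewrite mxE. Qed.

Lemma dotv_ge0 (p : nat) (u : 'cV[R]_p) : 0 <= dotv u u.
Proof. by rewrite dotv_sum; apply: sumr_ge0 => i _; rewrite -expr2 sqr_ge0. Qed.

Lemma dotv_scale (p : nat) (c : R) (u : 'cV[R]_p) : dotv (c *: u) (c *: u) = c ^+ 2 * dotv u u.
Proof.
rewrite !dotv_sum mulr_sumr; apply: eq_bigr => i _; rewrite !mxE; ring.
Qed.

Lemma pnorm_scale (p r : nat) (c : R) (u : 'cV[R]_p) (v : 'cV[R]_r) :
  0 <= c -> pnorm (c *: u) (c *: v) = c * pnorm u v.
Proof.
move=> c0; rewrite /pnorm !dotv_scale -mulrDr sqrtrM ?sqr_ge0 //.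
by rewrite sqrtr_sqr ger0_norm.
Qed.

Lemma pnorm_ge0 (p r : nat) (u : 'cV[R]_p) (v : 'cV[R]_r) : 0 <= pnorm u v.
Proof. exact: sqrtr_ge0. Qed.

Lemma dotv0 (p : nat) (u : 'cV[R]_p) : dotv u u = 0 -> u = 0.
Proof.
rewrite dotv_sum => h; apply/matrixP => i j; rewrite (ord1 j) mxE.
have hp : forall k : 'I_p, xpredT k -> 0 <= u k 0 * u k 0.
  by move=> k _; rewrite -expr2 sqr_ge0.
have := psumr_eq0P hp h.
by move=> /(_ i isT) /eqP; rewrite mulf_eq0 orbb => /eqP ->.
Qed.

Lemma pnorm0 (p r : nat) (u : 'cV[R]_p) (v : 'cV[R]_r) : pnorm u v = 0 -> u = 0 /\ v = 0.
Proof.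
rewrite /pnorm => /eqP; rewrite sqrtr_eq0 => h.
have h1 := dotv_ge0 u; have h2 := dotv_ge0 v.
split; apply: dotv0; lra.
Qed.

Lemma mono (n m : nat) (Q : 'M[R]_n.+1) (A : 'M[R]_(m, n.+1)) (u : 'cV[R]_n.+1) (w : 'cV[R]_m) :
  std_assumptions Q A -> A *m u = 0 -> 0 <= dotv u (Q *m u + A^T *m w).
Proof.
case=> _ _ hpd hAu.
have -> : dotv u (Q *m u + A^T *m w) = dotv u (Q *m u).
  rewrite /dotv mulmxDr [u^T *m (A^T *m w)]mulmxA -trmx_mul hAu trmx0 mul0mx addr0.
  by [].
case: (eqVneq u 0) => [->|hu].
  by rewrite /dotv trmx0 !mul0mx mxE.
by apply: ltW; apply: hpd.
Qed.


Section Res.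
Variables (n m : nat) (Q : 'M[R]_n.+1) (q : 'cV[R]_n.+1) (A : 'M[R]_(m, n.+1)).

Lemma rd_step (x dx : 'cV[R]_n.+1) (l dl : 'cV[R]_m) (s ds : 'cV[R]_n.+1) (a : R) :
  Q *m dx + A^T *m dl - ds = - r_d Q q A x l s ->
  r_d Q q A (x + a *: dx) (l + a *: dl) (s + a *: ds) = (1 - a) *: r_d Q q A x l s.
Proof.
move=> H.
have e : r_d Q q A (x + a *: dx) (l + a *: dl) (s + a *: ds) =
   r_d Q q A x l s + a *: (Q *m dx + A^T *m dl - ds).
  rewrite /r_d !mulmxDr -!scalemxAr.
  by apply/matrixP => i j; rewrite !mxE; ring.
by rewrite e H scalerN scalerBl scale1r.
Qed.

Lemma rp_step (x dx : 'cV[R]_n.+1) (a : R) :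
  A *m dx = - r_p A x -> r_p A (x + a *: dx) = (1 - a) *: r_p A x.
Proof.
move=> H; rewrite /r_p mulmxDr -scalemxAr H /r_p scalerN scalerBl scale1r.
by [].
Qed.


Lemma mono_step (std : std_assumptions Q A) (xs : 'cV[R]_n.+1) (ls : 'cV[R]_m) (ss : 'cV[R]_n.+1)
   (x dx x0 : 'cV[R]_n.+1) (l dl l0 : 'cV[R]_m) (s ds s0 : 'cV[R]_n.+1) (t : R) :
  optimal_pd Q q A xs ls ss ->
  Q *m dx + A^T *m dl - ds = - r_d Q q A x l s -> A *m dx = - r_p A x ->
  r_d Q q A x l s = t *: r_d Q q A x0 l0 s0 -> r_p A x = t *: r_p A x0 ->
  0 <= dotv (dx + t *: (x0 - xs)) (ds + t *: (s0 - ss)).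
Proof.
case=> hopt hAxs _ _ _ H1 H2 hrd hrp.
have hAu : A *m (dx + t *: (x0 - xs)) = 0.
  by rewrite mulmxDr -scalemxAr mulmxBr hAxs subr0 H2 hrp /r_p addNr.
have eds : ds = Q *m dx + A^T *m dl + r_d Q q A x l s.
  apply/matrixP => i j; move/matrixP: H1 => /(_ i j); rewrite !mxE => h; lra.
have ess : ss = Q *m xs + q + A^T *m ls.
  apply/matrixP => i j; move/matrixP: hopt => /(_ i j); rewrite /r_d !mxE => h; lra.
have -> : ds + t *: (s0 - ss) = Q *m (dx + t *: (x0 - xs)) + A^T *m (dl + t *: (l0 - ls)).
  rewrite eds hrd ess /r_d !(mulmxDr, mulmxBr) -!scalemxAr !mulmxBr.
  by apply/matrixP => i j; rewrite !mxE; ring.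
exact: mono.
Qed.

Lemma mono_iter (std : std_assumptions Q A) (xs : 'cV[R]_n.+1) (ls : 'cV[R]_m) (ss : 'cV[R]_n.+1)
   (x x0 : 'cV[R]_n.+1) (l l0 : 'cV[R]_m) (s s0 : 'cV[R]_n.+1) (t : R) :
  optimal_pd Q q A xs ls ss ->
  r_d Q q A x l s = t *: r_d Q q A x0 l0 s0 -> r_p A x = t *: r_p A x0 ->
  0 <= dotv (t *: x0 + (1 - t) *: xs - x) (t *: s0 + (1 - t) *: ss - s).
Proof.
case=> hopt hAxs _ _ _ hrd hrp.
have hAu : A *m (t *: x0 + (1 - t) *: xs - x) = 0.
  move: hrp; rewrite /r_p => hrp.
  by rewrite mulmxBr mulmxDr -!scalemxAr hAxs hrp scaler0 addr0 subrr.
have es : s = Q *m x + q + A^T *m l - t *: r_d Q q A x0 l0 s0.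
  apply/matrixP => i j; move/matrixP: hrd => /(_ i j); rewrite [r_d _ _ _ x l s]/r_d !mxE => h; lra.
have ess : ss = Q *m xs + q + A^T *m ls.
  apply/matrixP => i j; move/matrixP: hopt => /(_ i j); rewrite /r_d !mxE => h; lra.
have -> : t *: s0 + (1 - t) *: ss - s =
   Q *m (t *: x0 + (1 - t) *: xs - x) + A^T *m (t *: l0 + (1 - t) *: ls - l).
  rewrite es ess /r_d !(mulmxDr, mulmxBr) -!scalemxAr !mulmxN.
  by apply/matrixP => i j; rewrite !mxE; ring.
exact: mono.
Qed.

End Res.


Lemma comp_le_pnorm (p r : nat) (u : 'cV[R]_p) (v : 'cV[R]_r) (z : R) (i : 'I_p) :
  pnorm u v <= z -> 0 <= u i 0 -> u i 0 <= z.
Proof.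
move=> hp hu.
have P0 := pnorm_ge0 u v.
have hsq : pnorm u v ^+ 2 = dotv u u + dotv v v.
  by rewrite /pnorm sqr_sqrtr // addr_ge0 // dotv_ge0.
have h1 : u i 0 ^+ 2 <= dotv u u.
  rewrite dotv_sum expr2.
  apply: (term_le_sum (F := fun k => u k 0 * u k 0)) => k.
  by rewrite -expr2 sqr_ge0.
have h2 := dotv_ge0 v.
have h3 : pnorm u v ^+ 2 <= z ^+ 2 by rewrite !expr2; apply: ler_pM.
rewrite leNgt; apply/negP => hlt.
have z0 : 0 <= z by apply: le_trans hp.
have : z ^+ 2 < u i 0 ^+ 2 by rewrite !expr2; apply: ltr_pM.
lra.
Qed.

Lemma mu_sum (n : nat) (x s : 'cV[R]_n.+1) : mu x s = (\sum_i x i 0 * s i 0) / n.+1%:R.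
Proof. by rewrite /mu dotv_sum. Qed.

Lemma mu_sumN (n : nat) (x s : 'cV[R]_n.+1) : \sum_i x i 0 * s i 0 = n.+1%:R * mu x s.
Proof. rewrite mu_sum; field. by rewrite -(natrD _ 1 n) pnatr_eq0. Qed.

Lemma pnormC (p r : nat) (u : 'cV[R]_p) (v : 'cV[R]_r) : pnorm u v = pnorm v u.
Proof. by rewrite /pnorm addrC. Qed.

End Mx.

Section Run.
Variable R : realType.
Variables (beta gamma smin smax : R) (n m : nat) (Q : 'M[R]_n.+1) (q : 'cV[R]_n.+1)
  (A : 'M[R]_(m, n.+1)) (xs : 'cV[R]_n.+1) (ls : 'cV[R]_m) (ss : 'cV[R]_n.+1) (zeta : R)
  (x : nat -> 'cV[R]_n.+1) (l : nat -> 'cV[R]_m) (s : nat -> 'cV[R]_n.+1) (sigma : nat -> R)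
  (dx : nat -> 'cV[R]_n.+1) (dl : nat -> 'cV[R]_m) (ds : nat -> 'cV[R]_n.+1) (alpha : nat -> R).
Hypotheses (hb : 1 <= beta) (hg : 0 < gamma < 1) (hsmin : 0 < smin) (hsmax : smax <= 1 / 2) (hsm : smin <= smax)
  (std : std_assumptions Q A) (opt : optimal_pd Q q A xs ls ss) (z0 : 0 < zeta)
  (hz : pnorm xs ss <= zeta)
  (hx0 : x 0%N = zeta *: onesv R n.+1) (hl0 : l 0%N = 0) (hs0 : s 0%N = zeta *: onesv R n.+1)
  (run : IIPM_run Q q A beta gamma smin smax x l s sigma dx dl ds alpha).

Definition acc k (a : R) :=
  [/\ 0 < a, a <= 1,
      nbhd Q q A gamma beta (x 0%N) (l 0%N) (s 0%N)
               (x k + a *: dx k) (l k + a *: dl k) (s k + a *: ds k) &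
      mu (x k + a *: dx k) (s k + a *: ds k) <= (1 - a / 100) * mu (x k) (s k)].

Lemma run_k k :
  [/\ smin <= sigma k <= smax,
        [/\ Q *m dx k + A^T *m dl k - ds k = - r_d Q q A (x k) (l k) (s k),
        A *m dx k = - r_p A (x k) &
        (forall i, s k i 0 * dx k i 0 + x k i 0 * ds k i 0
                   = - (x k i 0 * s k i 0) + sigma k * mu (x k) (s k))],
        acc k (alpha k) /\ (forall a, acc k a -> a <= alpha k) &
        [/\ x k.+1 = x k + alpha k *: dx k,
            l k.+1 = l k + alpha k *: dl k &
            s k.+1 = s k + alpha k *: ds k]].
Proof. by case: run => _ [_ /(_ k)]. Qed.


Definition abar := smin * (1 - gamma) / (4 * c2 gamma beta * n.+1%:R ^+ 2).

Lemma c2_ge6 : 6 <= c2 gamma beta.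
Proof.
case/andP: hg => g0 g1.
rewrite /c2.
have h1 : 0 <= 1 / gamma by rewrite divr_ge0 // ltW.
have h2 : 0 <= 72 * beta ^+ 2 / gamma.
  by apply: divr_ge0; [apply: mulr_ge0; [lra|apply: sqr_ge0]| apply: ltW].
lra.
Qed.

Lemma abar_pos : 0 < abar.
Proof.
case/andP: hg => g0 g1; have c6 := c2_ge6.
rewrite /abar divr_gt0 //; first by rewrite mulr_gt0 //; lra.
by rewrite !mulr_gt0 ?exprn_gt0 ?ltr0n //; lra.
Qed.

Lemma abar_le1 : abar <= 1 / 24.
Proof.
case/andP: hg => g0 g1; have c6 := c2_ge6.
have N1 : 1 <= n.+1%:R ^+ 2 :> R by rewrite -natrX ler1n expn_gt0.
have den : 24 <= 4 * c2 gamma beta * n.+1%:R ^+ 2.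
  have : 6 <= c2 gamma beta * n.+1%:R ^+ 2.
    apply: (le_trans c2_ge6); rewrite -[X in X <= _]mulr1; apply: ler_wpM2l => //. lra.
  lra.
have smax0 : smin <= 1 / 2 by apply: le_trans hsmax.
rewrite /abar ler_pdivrMr; last lra.
have : smin * (1 - gamma) <= 1 / 2.
  rewrite -[X in _ <= X]mulr1; apply: ler_pM; try lra. exact: ltW.
lra.
Qed.


Lemma alpha_lb k t : 0 <= t <= 1 ->
  r_d Q q A (x k) (l k) (s k) = t *: r_d Q q A (x 0%N) (l 0%N) (s 0%N) ->
  r_p A (x k) = t *: r_p A (x 0%N) ->
  t * zeta ^+ 2 <= beta * mu (x k) (s k) ->
  nbhd Q q A gamma beta (x 0%N) (l 0%N) (s 0%N) (x k) (l k) (s k) ->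
  abar <= alpha k.
Proof.
move=> ht hrd hrp htb hnb.
case: (run_k k) => /andP[hs1 hs2] [H1 H2 H3] [_ hmax] _.
apply: hmax.
case: hnb => hres hxp hsp hcen.
case/andP: hg => g0 g1.
set muk := mu (x k) (s k).
have hsum : \sum_i x k i 0 * s k i 0 = n.+1%:R * muk by apply: mu_sumN.
have mu0 : 0 < muk.
  rewrite /muk mu_sum divr_gt0 ?ltr0n //.
  apply: (lt_le_trans (y := x k ord0 0 * s k ord0 0)); first exact: mulr_gt0.
  apply: (term_le_sum (F := fun i => x k i 0 * s k i 0)) => i.
  by apply: mulr_ge0; apply: ltW.
set sig := sigma k.
have sg0 : 0 < sig by apply: lt_le_trans hs1.
have sg1 : sig <= 1 / 2 by apply: le_trans hsmax.
case: opt => hopt hAxs hxs0 hss0 hxss.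
have hxs : forall i, 0 <= xs i 0 <= zeta.
  by move=> i; rewrite hxs0 /=; apply: comp_le_pnorm hz _.
have hss : forall i, 0 <= ss i 0 <= zeta.
  by move=> i; rewrite hss0 /=; apply: (comp_le_pnorm (v := xs)); [rewrite pnormC | exact: hss0].
have hxss' : \sum_i xs i 0 * ss i 0 = 0 by rewrite -dotv_sum.
have hm1 := mono_iter std opt hrd hrp.
rewrite hx0 hs0 dotv_sum in hm1.
have hm1' : 0 <= \sum_i (t * zeta + (1 - t) * xs i 0 - x k i 0) *
                         (t * zeta + (1 - t) * ss i 0 - s k i 0).
  move: hm1; congr (_ <= _); apply: eq_bigr => i _; rewrite !mxE; ring.
have hm2 := mono_step std opt H1 H2 hrd hrp.
rewrite hx0 hs0 dotv_sum in hm2.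
have hm2' : 0 <= \sum_i (dx k i 0 + t * (zeta - xs i 0)) * (ds k i 0 + t * (zeta - ss i 0)).
  move: hm2; congr (_ <= _); apply: eq_bigr => i _; rewrite !mxE; ring.
have hsig01 : 0 <= sig <= 1.
  apply/andP; split; [exact: ltW | apply: le_trans sg1 _; lra].
have hD := bound_D (N := n.+1) (x := fun i => x k i 0) (s := fun i => s k i 0)
   (dx := fun i => dx k i 0) (ds := fun i => ds k i 0) (xs := fun i => xs i 0)
   (ss := fun i => ss i 0) (ltn0Sn n) hxp hsp mu0 g0 hcen hsig01 hxs hss ht H3 hsum hxss' hm1' hm2'
   htb hb.
simpl in hD.
set W := c2 gamma beta * (n.+1%:R ^+ 2 * muk).
set D := fun i : 'I_n.+1 => s k i 0 * dx k i 0 ^+ 2 / x k i 0 + x k i 0 * ds k i 0 ^+ 2 / s k i 0.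
have D0 : forall i, 0 <= D i by move=> i; apply: D_ge0.
have SD0 : 0 <= \sum_i D i by apply: sumr_ge0 => i _.
have hW : forall i, `|dx k i 0 * ds k i 0| <= W.
  move=> i; apply: le_trans (amgm _ _ (hxp i) (hsp i)) _.
  apply: le_trans hD.
  apply: (@le_trans _ _ (D i)); first by have := D0 i; rewrite /D; lra.
  exact: (term_le_sum D0).
have hSW : `|\sum_i dx k i 0 * ds k i 0| <= W.
  apply: le_trans (ler_norm_sum _ _ _) _.
  apply: (@le_trans _ _ (\sum_i D i / 2)).
    by apply: ler_sum => i _; apply: amgm.
  rewrite -mulr_suml; apply: le_trans hD.
  rewrite -/D; lra.
have habW : 4 * (abar * W) <= sig * (1 - gamma) * muk.
  have c6 := c2_ge6.
  have -> : 4 * (abar * W) = smin * (1 - gamma) * muk.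
    rewrite /abar /W; field; apply/andP; split.
      by rewrite -(natrD _ 1 n) pnatr_eq0.
    by apply: lt0r_neq0; apply: lt_le_trans c6.
  apply: ler_wpM2r; first exact: ltW.
  apply: ler_wpM2r; [lra | exact: hs1].
have a0 := abar_pos; have a1 := abar_le1.
have ha : 0 < abar <= 1 by apply/andP; split => //; lra.
have := step_ok (ltn0Sn n) hxp hsp mu0 _ _ H3 hcen hsum hW hSW ha habW.
rewrite g0 g1 sg0 sg1 /= => /(_ isT isT).
set M := (\sum_i _) / _.
case=> hpx hps hpc hM1 hM2.
have hmuM : mu (x k + abar *: dx k) (s k + abar *: ds k) = M.
  rewrite mu_sum /M; congr (_ / _); apply: eq_bigr => i _; rewrite !mxE //.
rewrite /acc; split.
- exact: a0.
- by apply: (le_trans a1); lra.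
- split.
  + rewrite rd_step // rp_step // pnorm_scale; last lra.
    rewrite hmuM; apply: le_trans hres.
    set Pk := pnorm _ _.
    have P0 : 0 <= Pk by apply: pnorm_ge0.
    have M0 : 0 < M.
      apply: lt_le_trans hM2; apply: mulr_gt0 => //; lra.
    rewrite ler_pdivrMr // mulrAC ler_pdivlMr //.
    have -> : (1 - abar) * Pk * mu (x k) (s k) = Pk * ((1 - abar) * muk) by rewrite /muk; ring.
    exact: ler_wpM2l.
  + by move=> i; rewrite !mxE.
  + by move=> i; rewrite !mxE.
  + move=> i; rewrite hmuM !mxE; exact: hpc.
- by rewrite hmuM.
Qed.

Lemma step_facts k :
  [/\ 0 < alpha k, alpha k <= 1,
      nbhd Q q A gamma beta (x 0%N) (l 0%N) (s 0%N) (x k.+1) (l k.+1) (s k.+1),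
      mu (x k.+1) (s k.+1) <= (1 - alpha k / 100) * mu (x k) (s k) &
      r_d Q q A (x k.+1) (l k.+1) (s k.+1) = (1 - alpha k) *: r_d Q q A (x k) (l k) (s k)
      /\ r_p A (x k.+1) = (1 - alpha k) *: r_p A (x k)].
Proof.
case: (run_k k) => _ [H1 H2 _] [[a0 a1 hn hmu] _] [ex el es].
rewrite ex el es; split => //; split.
  exact: rd_step.
exact: rp_step.
Qed.

Lemma mu_init : mu (x 0%N) (s 0%N) = zeta ^+ 2.
Proof.
rewrite mu_sum hx0 hs0.
rewrite (eq_bigr (fun _ => zeta ^+ 2)); last by move=> i _; rewrite !mxE; ring.
rewrite sum_const_ord; field; by rewrite -(natrD _ 1 n) pnatr_eq0.
Qed.

Lemma nbhd_all k : nbhd Q q A gamma beta (x 0%N) (l 0%N) (s 0%N) (x k) (l k) (s k).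
Proof.
case: k => [|k]; last by case: (step_facts k).
case/andP: hg => g0 g1.
split.
- set P := pnorm _ _ / _.
  have P0 : 0 <= P by rewrite /P divr_ge0 ?pnorm_ge0 // mu_init sqr_ge0.
  rewrite -mulrA -/P -[X in X <= _]mul1r; exact: ler_wpM2r.
- by move=> i; rewrite hx0 !mxE mulr1.
- by move=> i; rewrite hs0 !mxE mulr1.
- move=> i; rewrite mu_init hx0 hs0 !mxE !mulr1 -[X in _ <= X]mul1r expr2.
  apply: ler_wpM2r; [by apply: mulr_ge0; apply: ltW | exact: ltW].
Qed.

Definition nu k := \prod_(j < k) (1 - alpha j).

Lemma nu_range k : 0 <= nu k <= 1.
Proof.
elim: k => [|k IH]; first by rewrite /nu big_ord0 ler01 lexx.
rewrite /nu big_ord_recr /= -/(nu k).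
case: (step_facts k) => a0 a1 _ _ _.
case/andP: IH => n0 n1.
apply/andP; split; first by apply: mulr_ge0 => //; lra.
rewrite -[X in _ <= X]mul1r; apply: ler_pM => //; lra.
Qed.

Lemma res_nu k : r_d Q q A (x k) (l k) (s k) = nu k *: r_d Q q A (x 0%N) (l 0%N) (s 0%N)
   /\ r_p A (x k) = nu k *: r_p A (x 0%N).
Proof.
elim: k => [|k [IH1 IH2]]; first by rewrite /nu big_ord0 !scale1r.
case: (step_facts k) => _ _ _ _ [e1 e2].
rewrite /nu big_ord_recr /= -/(nu k) e1 e2 IH1 IH2 !scalerA.
by split; congr (_ *: _); rewrite mulrC.
Qed.

Lemma alpha_ge k : abar <= alpha k.
Proof.
set P0 := pnorm (r_d Q q A (x 0%N) (l 0%N) (s 0%N)) (r_p A (x 0%N)).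
have [r1 r2] := res_nu k.
have hnb := nbhd_all k.
case: (eqVneq P0 0) => hP.
- have [z1 z2] := pnorm0 hP.
  apply: (alpha_lb (t := 0)) => //.
  + by rewrite lexx ler01.
  + by rewrite r1 z1 !scaler0.
  + by rewrite r2 z2 !scaler0.
  + rewrite mul0r; apply: mulr_ge0; first by apply: le_trans hb.
    by rewrite mu_sum divr_ge0 // sumr_ge0 // => i _; case: hnb => _ hx hs _;
      apply: mulr_ge0; apply: ltW.
- apply: (alpha_lb (t := nu k)) => //; first exact: nu_range.
  have P00 : 0 < P0 by rewrite lt_def hP pnorm_ge0.
  case: hnb => hres hx hs _.
  rewrite r1 r2 pnorm_scale ?(proj1 (andP (nu_range k))) // -/P0 mu_init in hres.
  have muk0 : 0 < mu (x k) (s k).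
    rewrite mu_sum divr_gt0 ?ltr0n //.
    apply: (lt_le_trans (y := x k ord0 0 * s k ord0 0)); first exact: mulr_gt0.
    apply: (term_le_sum (F := fun i => x k i 0 * s k i 0)) => i.
    by apply: mulr_ge0; apply: ltW.
  have zz : 0 < zeta ^+ 2 by rewrite exprn_gt0.
  move: hres; rewrite ler_pdivrMr // mulrAC ler_pdivlMr // => h.
  have : P0 * (nu k * zeta ^+ 2) <= P0 * (beta * mu (x k) (s k)).
    have -> : P0 * (nu k * zeta ^+ 2) = nu k * P0 * zeta ^+ 2 by ring.
    by have -> : P0 * (beta * mu (x k) (s k)) = beta * P0 * mu (x k) (s k) by ring.
  by rewrite ler_pM2l.
Qed.

Lemma mu_bound k : mu (x k) (s k) <= (1 - abar / 100) ^+ k * zeta ^+ 2.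
Proof.
elim: k => [|k IH]; first by rewrite expr0 mul1r mu_init.
case: (step_facts k) => a0 a1 hnb hmu _.
have hab := alpha_ge k.
have muk0 : 0 <= mu (x k) (s k).
  by rewrite mu_sum divr_ge0 // sumr_ge0 // => i _; case: (nbhd_all k) => _ hx hs _;
    apply: mulr_ge0; apply: ltW.
apply: le_trans hmu _.
have h1 : (1 - alpha k / 100) * mu (x k) (s k) <= (1 - abar / 100) * mu (x k) (s k).
  apply: ler_wpM2r => //; lra.
apply: le_trans h1 _.
rewrite exprS -mulrA; apply: ler_wpM2l => //.
have := abar_le1; lra.
Qed.

End Run.

Lemma count_lemma (R : realType) (chi kappa eps rho zeta : R) (mus : nat -> R) :
  0 < chi -> 0 < kappa -> 0 < eps -> 0 < rho <= 1 ->
  zeta ^+ 2 <= chi / (eps `^ kappa) ->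
  (forall k, mus k <= (1 - rho) ^+ k * zeta ^+ 2) ->
  exists K : nat, K%:R <= (`|ln chi| + (1 + kappa) * `|ln eps|) / rho + 1 /\
    forall k, (K <= k)%N -> mus k <= eps.
Proof.
move=> c0 k0 e0 /andP[r0 r1] hz hmu.
set L := `|ln chi| + (1 + kappa) * `|ln eps|.
have L0 : 0 <= L by rewrite /L addr_ge0 // mulr_ge0 // addr_ge0 // ltW.
set y := L / rho.
have y0 : 0 <= y by rewrite /y divr_ge0 // ltW.
exists (Num.truncn y).+1.
have [t1 t2] := andP (truncn_itv y0).
split.
  rewrite -natr1 lerD2r; exact: t1.
move=> k hk.
apply: le_trans (hmu k) _.
have hpow : (1 - rho) ^+ k <= expR (- (rho * k%:R)).
  rewrite -mulNr expRM_natr.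
  apply: lerXn2r.
  - by rewrite nnegrE subr_ge0.
  - by rewrite nnegrE expR_ge0.
  - by have := expR_ge1Dx (- rho); rewrite addrC.
have hK : L <= rho * k%:R.
  have : y <= k%:R.
    apply: le_trans (ltW t2) _; by rewrite ler_nat.
  rewrite /y ler_pdivrMr // mulrC //.
have hz' : zeta ^+ 2 <= expR (ln chi - kappa * ln eps).
  rewrite expRB lnK ?posrE //.
  by move: hz; rewrite /powR (negbTE (lt0r_neq0 e0)).
apply: (@le_trans _ _ (expR (- (rho * k%:R)) * expR (ln chi - kappa * ln eps))).
  apply: ler_pM => //; [apply: exprn_ge0; lra | exact: sqr_ge0].
rewrite -expRD -[X in _ <= X](lnK (x := eps)) ?posrE //.
rewrite ler_expR.
have h1 : ln chi <= `|ln chi| by apply: ler_norm.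
have h2 : - ln eps <= `|ln eps| by rewrite -normrN ler_norm.
have h3 : - (kappa * ln eps) <= kappa * `|ln eps|.
  by rewrite -mulrN; apply: ler_wpM2l; [exact: ltW | exact: h2].
move: hK; rewrite /L; lra.
Qed.

Theorem theorem3 (R : realType) (chi kappa beta gamma smin smax : R) :
  0 < chi -> 0 < kappa -> 1 <= beta -> 0 < gamma < 1 ->
  0 < smin -> smin < smax -> smax <= 1 / 2 ->
  exists C : R, 0 < C /\
  forall (n m : nat) (Q : 'M[R]_n.+1) (q : 'cV[R]_n.+1) (A : 'M[R]_(m, n.+1))
         (xs : 'cV[R]_n.+1) (ls : 'cV[R]_m) (ss : 'cV[R]_n.+1) (eps zeta : R),
    std_assumptions Q A ->
    optimal_pd Q q A xs ls ss ->
    0 < eps -> 0 < zeta ->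
    pnorm xs ss <= zeta ->
    zeta ^+ 2 <= chi / (eps `^ kappa) ->
    forall (x : nat -> 'cV[R]_n.+1) (l : nat -> 'cV[R]_m) (s : nat -> 'cV[R]_n.+1)
           (sigma : nat -> R)
           (dx : nat -> 'cV[R]_n.+1) (dl : nat -> 'cV[R]_m) (ds : nat -> 'cV[R]_n.+1)
           (alpha : nat -> R),
      x 0%N = zeta *: onesv R n.+1 -> l 0%N = 0 -> s 0%N = zeta *: onesv R n.+1 ->
      IIPM_run Q q A beta gamma smin smax x l s sigma dx dl ds alpha ->
      exists K : nat,
        K%:R <= C * (n.+1%:R) ^+ 2 * (1 + `|ln eps|) /\
        forall k : nat, (K <= k)%N -> mu (x k) (s k) <= eps.
Proof.
move=> c0 k0 hb hg hsmin hsm hsmax.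
have [g0 g1] := andP hg.
have c6 : 6 <= c2 gamma beta.
  rewrite /c2.
  have h1 : 0 <= 1 / gamma by rewrite divr_ge0 // ltW.
  have h2 : 0 <= 72 * beta ^+ 2 / gamma.
    by apply: divr_ge0; [apply: mulr_ge0; [lra|apply: sqr_ge0]| apply: ltW].
  lra.
set delta := smin * (1 - gamma) / (4 * c2 gamma beta).
have d0 : 0 < delta.
  rewrite /delta divr_gt0 //; first by rewrite mulr_gt0 //; lra.
  by rewrite mulr_gt0 //; lra.
set a := `|ln chi|.
have a0 : 0 <= a by apply: normr_ge0.
exists (100 * (a + 1 + kappa) / delta + 1).
split.
  have : 0 <= 100 * (a + 1 + kappa) / delta.
    by apply: divr_ge0; [apply: mulr_ge0; lra | exact: ltW].
  lra.
move=> n m Q q A xs ls ss eps zeta std opt e0 z0 hz hzeta x l s sigma dx dl ds alpha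
  hx0 hl0 hs0 run.
have hmb := mu_bound hb hg hsmin hsmax (ltW hsm) std opt z0 hz hx0 hs0 run.
have ab0 := @abar_pos R beta gamma smin n hg hsmin.
have ab1 := @abar_le1 R beta gamma smin smax n hg hsmin hsmax (ltW hsm).
set rho := abar beta gamma smin n / 100.
have hrho : 0 < rho <= 1 by apply/andP; split; rewrite /rho; lra.
have [K [hK1 hK2]] := count_lemma c0 k0 e0 hrho hzeta hmb.
exists K; split => //.
apply: le_trans hK1 _.
set b := `|ln eps|.
have b0 : 0 <= b by apply: normr_ge0.
set NN := n.+1%:R ^+ 2 : R.
have NN1 : 1 <= NN by rewrite /NN -natrX ler1n expn_gt0.
set L := a + (1 + kappa) * b.
set G := (a + 1 + kappa) * (1 + b).
have LG : L <= G.
  have : 0 <= a * b by apply: mulr_ge0.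
  have -> : G = L + a * b + (1 + kappa) by rewrite /G /L; ring.
  lra.
have N0 : (n.+1%:R : R) != 0 by rewrite pnatr_eq0.
have e1 : L / rho = 100 * NN * L / delta.
  rewrite /rho /abar /delta /NN; field.
  apply/and4P; split => //.
  - by apply: lt0r_neq0; apply: lt_le_trans c6.
  - by apply: lt0r_neq0; lra.
  - by apply: lt0r_neq0.
rewrite e1.
have e2 : (100 * (a + 1 + kappa) / delta + 1) * NN * (1 + b)
   = 100 * NN * G / delta + NN * (1 + b) by rewrite /G; field; apply: lt0r_neq0.
rewrite e2.
have h3 : 100 * NN * L / delta <= 100 * NN * G / delta.
  apply: ler_wpM2r; first by rewrite invr_ge0 ltW.
  apply: ler_wpM2l => //; apply: mulr_ge0 => //; lra.
have h4 : 1 <= NN * (1 + b).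
  rewrite -[X in X <= _]mulr1; apply: ler_pM => //; lra.
lra.
Qed.
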